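(* Let $n,p,r,d$ be positive integers with $d\le\min(p,r)$, let ${\mathbf S}\in\mathbb R^{p\times p}$ be symmetric positive definite, ${\mathbf F}\in\mathbb R^{n\times r}$ of full column rank, ${\mathbf M}\in\mathbb R^{n\times p}$, ${\mathbf S}_{\mathrm{fit}}=n^{-1}{\mathbf M}^T{\mathbf F}({\mathbf F}^T{\mathbf F})^{-1}{\mathbf F}^T{\mathbf M}$, and assume ${\mathbf S}_{\mathrm{res}}={\mathbf S}-{\mathbf S}_{\mathrm{fit}}$ is positive definite. Fix $\alpha\in\mathbb R^{p\times d}$ with $\alpha^T\alpha=I_d$. Over symmetric positive definite $\Delta\in\mathbb R^{p\times p}$, the function $$G(\Delta)=-\tfrac{pn}{2}\log(2\pi)-\tfrac n2\log|\Delta|-\tfrac n2\operatorname{tr}(\Delta^{-1}{\mathbf S})+\tfrac n2\operatorname{tr}\big[(\alpha^T\Delta\alpha)^{-1}\alpha^T{\mathbf S}_{\mathrm{fit}}\alpha\big]$$ attains its maximum at the $\Delta$ given by $$\Delta^{-1}={\mathbf S}^{-1}+\alpha(\alpha^T{\mathbf S}_{\mathrm{res}}\alpha)^{-1}\alpha^T-\alpha(\alpha^T{\mathbf S}\alpha)^{-1}\alpha^T,$$ and the maximal value equals $$-\tfrac{pn}{2}\big[\log(2\pi)+1\big]-\tfrac n2\log|\alpha^T{\mathbf S}_{\mathrm{res}}\alpha|-\tfrac n2\log|{\mathbf S}|+\tfrac n2\log|\alpha^T{\mathbf S}\alpha|.$$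
   Context: $|A|$ denotes the determinant and $\operatorname{tr}$ the trace. $G$ is the function obtained from the EM $Q$-function after maximizing over the parameter $\xi$; ${\mathbf S}$, ${\mathbf M}$, ${\mathbf F}$ are respectively an averaged conditional second-moment matrix, the matrix of conditional means, and the matrix of centered basis functions of the response. *)

(* Defs.v *)
From HB Require Import structures.
From Stdlib Require Import Reals Lra.
From Stdlib Require Import Classical ClassicalEpsilon FunctionalExtensionality.
From mathcomp Require Import all_boot all_order all_algebra.

Set Implicit Arguments.
Unset Strict Implicit.
Unset Printing Implicit Defensive.

Definition Req_bool (x y : R) : bool := if Req_EM_T x y then true else false.

Lemma Req_boolP : Equality.axiom Req_bool.
Proof. by move=> x y; rewrite /Req_bool; case: Req_EM_T => h; constructor. Qed.

HB.instance Definition _ := hasDecEq.Build R Req_boolP.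

Definition R_find (P : pred R) (_ : nat) : option R :=
  match excluded_middle_informative (exists x, P x) with
  | left h => Some (proj1_sig (constructive_indefinite_description _ h))
  | right _ => None
  end.

Lemma R_find_correct (P : pred R) n x : R_find P n = Some x -> P x.
Proof.
rewrite /R_find; case: excluded_middle_informative => // h [<-].
exact: proj2_sig (constructive_indefinite_description _ h).
Qed.

Lemma R_find_complete (P : pred R) : (exists x, P x) -> exists n, R_find P n.
Proof.
move=> h; exists 0%N; rewrite /R_find.
by case: excluded_middle_informative.
Qed.

Lemma R_find_ext (P Q : pred R) : P =1 Q -> R_find P =1 R_find Q.
Proof.
move=> hPQ; have -> : P = Q by apply: functional_extensionality.
by [].
Qed.

HB.instance Definition _ :=
  hasChoice.Build R R_find_correct R_find_complete R_find_ext.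

Lemma R_addA : associative Rplus.
Proof. by move=> x y z; rewrite Rplus_assoc. Qed.
Lemma R_addC : commutative Rplus.
Proof. exact: Rplus_comm. Qed.
Lemma R_add0 : left_id R0 Rplus.
Proof. exact: Rplus_0_l. Qed.
Lemma R_addN : left_inverse R0 Ropp Rplus.
Proof. exact: Rplus_opp_l. Qed.

HB.instance Definition _ :=
  GRing.isZmodule.Build R R_addA R_addC R_add0 R_addN.

Lemma R_mulA : associative Rmult.
Proof. by move=> x y z; rewrite Rmult_assoc. Qed.
Lemma R_mulC : commutative Rmult.
Proof. exact: Rmult_comm. Qed.
Lemma R_mul1 : left_id R1 Rmult.
Proof. exact: Rmult_1_l. Qed.
Lemma R_mulDl : left_distributive Rmult Rplus.
Proof. by move=> x y z; rewrite Rmult_plus_distr_r. Qed.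
Lemma R_one_neq0 : R1 != R0.
Proof. by apply/eqP; exact: R1_neq_R0. Qed.

HB.instance Definition _ :=
  GRing.Zmodule_isComNzRing.Build R R_mulA R_mulC R_mul1 R_mulDl R_one_neq0.

Definition R_inv (x : R) : R := if Req_EM_T x R0 then R0 else Rinv x.

Lemma R_mulVf (x : R) : x != R0 -> Rmult (R_inv x) x = R1.
Proof.
move=> /eqP hx; rewrite /R_inv; destruct (Req_EM_T x R0) as [e|ne].
- by case: hx.
- exact: Rinv_l.
Qed.

Lemma R_inv0 : R_inv R0 = R0.
Proof. rewrite /R_inv; destruct (Req_EM_T R0 R0) as [e|ne] => //. Qed.

HB.instance Definition _ := GRing.ComNzRing_isField.Build R R_mulVf R_inv0.

Local Open Scope ring_scope.

Definition sym_pd (p : nat) (A : 'M[R]_p) : Prop :=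
  A^T = A /\
  forall x : 'cV[R]_p, x != 0 -> Rlt R0 ((x^T *m A *m x) ord0 ord0).

Definition Sfit (n p r : nat) (F : 'M[R]_(n, r)) (M : 'M[R]_(n, p)) : 'M[R]_p :=
  (INR n)^-1 *: (M^T *m F *m invmx (F^T *m F) *m F^T *m M).

Definition Sres (n p r : nat) (S : 'M[R]_p) (F : 'M[R]_(n, r))
    (M : 'M[R]_(n, p)) : 'M[R]_p :=
  S - Sfit F M.

Definition Gfun (n p r d : nat) (S : 'M[R]_p) (F : 'M[R]_(n, r))
    (M : 'M[R]_(n, p)) (alpha : 'M[R]_(p, d)) (Delta : 'M[R]_p) : R :=
  (- (INR p * INR n / 2) * ln (2 * PI)
   - INR n / 2 * ln (\det Delta)
   - INR n / 2 * \tr (invmx Delta *m S)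
   + INR n / 2 * \tr (invmx (alpha^T *m Delta *m alpha)
                        *m (alpha^T *m Sfit F M *m alpha)))%R.

(* Main.v *)
Require Import Defs.
From HB Require Import structures.
From Stdlib Require Import Reals Lra.
From mathcomp Require Import all_boot all_order all_algebra ring.
Set Implicit Arguments.
Unset Strict Implicit.
Unset Printing Implicit Defensive.
Import GRing.Theory.
Local Open Scope ring_scope.



Lemma addRE (x y : R) : x + y = Rplus x y. Proof. by []. Qed.
Lemma mulRE (x y : R) : x * y = Rmult x y. Proof. by []. Qed.
Lemma oppRE (x : R) : - x = Ropp x. Proof. by []. Qed.
Lemma zeroRE : 0 = R0 :> R. Proof. by []. Qed.
Lemma oneRE : 1 = R1 :> R. Proof. by []. Qed.
Lemma invRE (x : R) : x^-1 = Rinv x.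
Proof.
rewrite /GRing.inv /= /R_inv; case: Req_EM_T => // e /=.
by rewrite [in RHS]e Rinv_0.
Qed.
Lemma natRE k : k%:R = INR k :> R.
Proof.
elim: k => [//|k IH]; rewrite mulrS IH S_INR addRE oneRE; lra.
Qed.

Definition qf k (A : 'M[R]_k) (x : 'cV[R]_k) : R := (x^T *m A *m x) ord0 ord0.

Lemma qf_mul k m (A : 'M[R]_k) (B : 'M[R]_(k, m)) x :
  qf A (B *m x) = qf (B^T *m A *m B) x.
Proof. by rewrite /qf trmx_mul !mulmxA. Qed.

Lemma qfD k (A B : 'M[R]_k) x : qf (A + B) x = qf A x + qf B x.
Proof. by rewrite /qf mulmxDr mulmxDl mxE. Qed.

Lemma qfN k (A : 'M[R]_k) x : qf (- A) x = - qf A x.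
Proof. by rewrite /qf mulmxN mulNmx mxE. Qed.

Lemma qf0 k (A : 'M[R]_k) : qf A 0 = 0.
Proof. by rewrite /qf mulmx0 mxE. Qed.

Lemma pd_ge0 k (A : 'M[R]_k) x : sym_pd A -> Rle R0 (qf A x).
Proof.
move=> [_ hA]; case: (eqVneq x 0) => [->|nz]; first by rewrite qf0; apply: Rle_refl.
by apply: Rlt_le; apply: hA.
Qed.

Lemma pd_unit k (A : 'M[R]_k) : sym_pd A -> A \in unitmx.
Proof.
move=> [hs hA]; rewrite unitmxE unitfE; apply/negP => /det0P [v nz vA].
have : v^T != 0 by rewrite -(inj_eq (@trmx_inj _ _ _)) trmxK trmx0.
by move/hA; rewrite trmxK vA mul0mx mxE => /Rlt_irrefl.
Qed.

Lemma pd_congr k m (A : 'M[R]_k) (B : 'M[R]_(k, m)) :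
  sym_pd A -> (forall x : 'cV[R]_m, B *m x = 0 -> x = 0) -> sym_pd (B^T *m A *m B).
Proof.
move=> [hs hA] hB; split.
  by rewrite !trmx_mul trmxK hs mulmxA.
move=> x nz; rewrite -/(qf _ _) -qf_mul; apply: hA.
by apply/eqP => /hB; apply/eqP.
Qed.

Lemma pd_inv k (A : 'M[R]_k) : sym_pd A -> sym_pd (invmx A).
Proof.
move=> hA; have uA := pd_unit hA; have [hs _] := hA.
have sI : (invmx A)^T = invmx A by rewrite trmx_inv hs.
have -> : invmx A = (invmx A)^T *m A *m invmx A.
  by rewrite sI mulVmx ?mul1mx.
apply: pd_congr => // x hx.
by rewrite -(mulKVmx uA x) hx mulmx0.
Qed.



Lemma qf_blockdiag k1 k2 (A : 'M[R]_k1) (C : 'M[R]_k2) x y :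
  qf (block_mx A 0 0 C) (col_mx x y) = qf A x + qf C y.
Proof.
rewrite /qf tr_col_mx mul_row_block !mulmx0 addr0 add0r.
by rewrite mul_row_col mxE.
Qed.

Lemma qf_scalar1 (a : R) : qf (a%:M : 'M_1) 1%:M = a.
Proof. by rewrite /qf trmx1 mul1mx mulmx1 mxE eqxx mulr1n. Qed.

Lemma schur k (M : 'M[R]_(1 + k)) : sym_pd M ->
  exists (a : R) (v : 'cV[R]_k) (M1 : 'M[R]_k),
   [/\ M = block_mx a%:M v^T v M1, Rlt R0 a,
   sym_pd (M1 - a^-1 *: (v *m v^T)) &
   \det M = a * \det (M1 - a^-1 *: (v *m v^T))].
Proof.
move=> hM; have [hs hpos] := hM.
set a := ulsubmx M ord0 ord0; set v := dlsubmx M; set M1 := drsubmx M.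
have eM : M = block_mx a%:M v^T v M1.
  rewrite -{1}(submxK M) /a -mx11_scalar /v trmx_dlsub hs //.
have sM1 : M1^T = M1 by rewrite /M1 trmx_drsub hs.
have nz1 : col_mx (1%:M : 'M[R]_1) (0 : 'cV[R]_k) != 0.
  rewrite col_mx_eq0 negb_and; apply/orP; left; apply/eqP => h.
  have := congr1 (fun A : 'M[R]_1 => A ord0 ord0) h; rewrite !mxE eqxx /=.
  by move/eqP; rewrite oner_eq0.
have ha : Rlt R0 a.
  have := hpos _ nz1.
  rewrite eM /qf tr_col_mx trmx1 trmx0 mul_row_block !mul0mx !mul1mx !addr0.
  by rewrite mul_row_col mulmx1 mulmx0 addr0 mxE eqxx mulr1n.
have a0 : a != 0 by apply/eqP => e; rewrite e in ha; exact: (Rlt_irrefl _ ha).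
set S1 := M1 - a^-1 *: (v *m v^T).
set L : 'M[R]_(1 + k) := block_mx 1%:M 0 (- (a^-1 *: v)) 1%:M.
have eD : L *m M *m L^T = block_mx a%:M 0 0 S1.
  rewrite eM /L tr_block_mx !trmx1 trmx0 !mulmx_block.
  rewrite !mul1mx !mul0mx !mulmx0 !mulmx1 !addr0.
  have e1 : - (a^-1 *: v) *m a%:M + v = 0.
    by rewrite mul_mx_scalar scalerN scalerA mulfV // scale1r addNr.
  have e2 : a%:M *m (- (a^-1 *: v))^T + v^T = 0.
    by rewrite mul_scalar_mx linearN linearZ /= scalerN scalerA mulfV // scale1r addNr.
  by rewrite e1 e2 mul0mx add0r /S1 addrC mulNmx scalemxAl.
have detL : \det L = 1 by rewrite det_lblock !det1 mulr1.
have uL : L \in unitmx by rewrite unitmxE detL unitr1.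
have hD : sym_pd (L *m M *m L^T).
  rewrite -{1}(trmxK L); apply: pd_congr => // x hx.
  have uLt : L^T \in unitmx by rewrite unitmx_tr.
  by rewrite -(mulKmx uLt x) hx mulmx0.
rewrite eD in hD.
exists a, v, M1; split => //.
  split.
    by rewrite /S1 linearB linearZ /= trmx_mul trmxK sM1.
  move=> y nzy.
  have nz : col_mx (0 : 'M[R]_1) y != 0 by rewrite col_mx_eq0 negb_and nzy orbT.
  by have := hD.2 _ nz; rewrite -/(qf _ _) qf_blockdiag qf0 add0r.
have := congr1 determinant eD.
by rewrite !det_mulmx det_tr det_ublock det_scalar1 detL mul1r mulr1.
Qed.



Lemma ln_le_sub1 (a : R) : Rlt R0 a -> Rle (ln a) (Rminus a R1).
Proof.
move=> ha; have h := exp_ineq1_le (Rminus a R1).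
have h' : Rle a (exp (Rminus a R1)) by lra.
case: (Rle_lt_or_eq_dec _ _ h') => [lt|eq].
  by have := ln_increasing _ _ ha lt; rewrite ln_exp; apply: Rlt_le.
by rewrite {1}eq ln_exp; apply: Rle_refl.
Qed.

Lemma sumsq_ge0 k (v : 'cV[R]_k) : Rle R0 ((v^T *m v) ord0 ord0).
Proof.
rewrite mxE; apply: (big_ind (fun x => Rle R0 x)).
- exact: Rle_refl.
- by move=> x y hx hy; rewrite addRE; lra.
- by move=> i _; rewrite mxE mulRE; apply: Rle_0_sqr.
Qed.

Lemma logdet_tr k (M : 'M[R]_k) : sym_pd M ->
  Rlt R0 (\det M) /\ Rle (ln (\det M)) (Rminus (\tr M) (INR k)).
Proof.
elim: k M => [|k IH] M hM.
  rewrite det_mx00 /mxtrace big_ord0 ln_1 /=; split; [exact: Rlt_0_1|].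
  rewrite zeroRE; lra.
have [a [v [M1 [eM ha hS hdet]]]] := @schur k M hM.
have [hd1 hl1] := IH _ hS.
set S1 := M1 - a^-1 *: (v *m v^T) in hS hdet hd1 hl1.
have htr : \tr (M : 'M_(1 + k)) = a + (\tr S1 + a^-1 * (v^T *m v) ord0 ord0).
  rewrite eM mxtrace_block mxtrace_scalar /S1 raddfB /= mxtraceZ.
  rewrite mxtrace_mulC trace_mx11; congr (_ + _); rewrite subrK //.
have hpos : Rle R0 ((a^-1 * (v^T *m v) ord0 ord0)%R).
  rewrite mulRE invRE; apply: Rmult_le_pos; last exact: sumsq_ge0.
  by apply: Rlt_le; apply: Rinv_0_lt_compat.
have hdM : \det M = Rmult a (\det S1) by rewrite hdet.
split; first by rewrite hdM; apply: Rmult_lt_0_compat.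
rewrite hdM ln_mult // htr S_INR !addRE.
have := ln_le_sub1 ha; lra.
Qed.

Lemma chol k (W : 'M[R]_k) : sym_pd W -> exists C : 'M[R]_k, W = C *m C^T.
Proof.
elim: k W => [|k IH] W hW.
  by exists 0; apply/matrixP => i [].
suff: forall W' : 'M[R]_(1 + k), sym_pd W' -> exists C : 'M[R]_(1 + k), W' = C *m C^T.
  by move=> /(_ W hW).
move=> {}W {}hW.
have [a [v [M1 [eM ha hS _]]]] := @schur k W hW.
have [C1 eC1] := IH _ hS.
set s := sqrt a.
have hs : Rlt R0 s by apply: sqrt_lt_R0.
have s0 : s != 0 by apply/eqP => e; rewrite e in hs; exact: (Rlt_irrefl _ hs).
have ss : s * s = a by rewrite mulRE /s sqrt_sqrt //; apply: Rlt_le.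
exists (block_mx s%:M 0 (s^-1 *: v) C1 : 'M_(1 + k)).
rewrite eM tr_block_mx trmx0 tr_scalar_mx mulmx_block.
rewrite !mulmx0 !mul0mx !addr0 -eC1 -scalar_mxM ss.
rewrite mul_scalar_mx mul_mx_scalar linearZ /= !scalerA mulfV // !scale1r.
rewrite -scalemxAl -scalemxAr scalerA -invfM ss.
by rewrite addrC subrK.
Qed.

Lemma inv_uniq k (A B : 'M[R]_k) : A *m B = 1%:M -> invmx A = B.
Proof.
move=> AB; have [uA _] := mulmx1_unit AB.
by rewrite -[invmx A]mulmx1 -AB mulmxA mulVmx // mul1mx.
Qed.

Lemma invmxM k (A B : 'M[R]_k) : A \in unitmx -> B \in unitmx ->
  invmx (A *m B) = invmx B *m invmx A.
Proof.
move=> uA uB; apply: inv_uniq.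
by rewrite mulmxA -(mulmxA A) mulmxV // mulmx1 mulmxV.
Qed.

Lemma det_pos k (A : 'M[R]_k) : sym_pd A -> Rlt R0 (\det A).
Proof. by move/logdet_tr => []. Qed.

Lemma logdet_ineq k (W T : 'M[R]_k) : sym_pd W -> sym_pd T ->
  Rle (ln (\det T)) (Rminus (Rplus (ln (\det W)) (\tr (invmx W *m T))) (INR k)).
Proof.
move=> hW hT; have [C eC] := chol hW.
have uW := pd_unit hW.
have uC : C \in unitmx by move: uW; rewrite eC unitmx_mul => /andP [].
have uCt : C^T \in unitmx by rewrite unitmx_tr.
set B := (invmx C)^T.
have uB : B \in unitmx by rewrite /B unitmx_tr unitmx_inv.
have hM : sym_pd (B^T *m T *m B).
  apply: pd_congr => // x hx; by rewrite -(mulKmx uB x) hx mulmx0.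
have [hdM hlM] := logdet_tr hM.
have hdW := det_pos hW.
have edet : \det T = Rmult (\det (B^T *m T *m B)) (\det W).
  rewrite -mulRE !det_mulmx eC det_mulmx /B.
  rewrite trmxK !det_tr det_inv.
  have c0 : \det C != 0 by rewrite -unitfE -unitmxE.
  by field.
have etr : \tr (B^T *m T *m B) = \tr (invmx W *m T).
  rewrite mxtrace_mulC mulmxA eC invmxM // /B trmxK trmx_inv.
  done.
rewrite edet ln_mult // -etr.
move: hlM; set t := \tr (B^T *m T *m B); set l := ln (\det (B^T *m T *m B)).
move=> h; lra.
Qed.



Lemma sylvester m n (U : 'M[R]_(m, n)) (V : 'M[R]_(n, m)) :
  \det (1%:M + U *m V) = \det (1%:M + V *m U).
Proof.
have e1 : block_mx 1%:M 0 V 1%:M *m block_mx 1%:M (-U) 0 (1%:M + V *m U)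
          = block_mx 1%:M (-U) V 1%:M :> 'M[R]_(m + n).
  rewrite mulmx_block ?mul1mx ?mul0mx ?mulmx0 ?addr0 ?mulmx1 ?add0r.
  by rewrite mulmxN addrCA addNr addr0.
have e2 : block_mx (1%:M + U *m V) (-U) 0 1%:M *m block_mx 1%:M 0 V 1%:M
          = block_mx 1%:M (-U) V 1%:M :> 'M[R]_(m + n).
  rewrite mulmx_block ?mul1mx ?mul0mx ?mulmx0 ?addr0 ?mulmx1 ?add0r.
  by rewrite mulNmx addrK.
have := congr1 determinant e1; rewrite -e2 !det_mulmx.
rewrite (@det_lblock _ m n) !(@det_ublock _ m n) !det1 !mul1r mulr1.
by rewrite mulr1 => ->.
Qed.

Lemma alpha_inj p d (al : 'M[R]_(p, d)) : al^T *m al = 1%:M ->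
  forall x : 'cV[R]_d, al *m x = 0 -> x = 0.
Proof. by move=> ha x hx; rewrite -(mul1mx x) -ha -mulmxA hx mulmx0. Qed.

Definition Gm p d (al : 'M[R]_(p, d)) (D : 'M[R]_p) : 'M[R]_p :=
  invmx D - al *m invmx (al^T *m D *m al) *m al^T.

Definition Pm p d (al : 'M[R]_(p, d)) (D : 'M[R]_p) (Y : 'M[R]_d) : 'M[R]_p :=
  Gm al D + al *m Y *m al^T.

Lemma pd_W p d (al : 'M[R]_(p, d)) D : al^T *m al = 1%:M -> sym_pd D ->
  sym_pd (al^T *m D *m al).
Proof. by move=> ha hD; apply: pd_congr => //; apply: alpha_inj. Qed.

Lemma Gm_sym p d (al : 'M[R]_(p, d)) D : al^T *m al = 1%:M -> sym_pd D ->
  (Gm al D)^T = Gm al D.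
Proof.
move=> ha hD; have [s1 _] := pd_inv hD; have [s2 _] := pd_inv (pd_W ha hD).
by rewrite /Gm linearB /= s1 !trmx_mul trmxK s2 mulmxA.
Qed.

Lemma GDG p d (al : 'M[R]_(p, d)) D : al^T *m al = 1%:M -> sym_pd D ->
  Gm al D *m D *m Gm al D = Gm al D.
Proof.
move=> ha hD; have uD := pd_unit hD; have uW := pd_unit (pd_W ha hD).
set W := al^T *m D *m al.
have -> : Gm al D *m D = 1%:M - al *m invmx W *m al^T *m D.
  by rewrite /Gm mulmxBl mulVmx.
rewrite /Gm mulmxBl mul1mx mulmxBr.
have -> : al *m invmx W *m al^T *m D *m invmx D = al *m invmx W *m al^T.
  by rewrite -mulmxA mulmxV // mulmx1.
have -> : al *m invmx W *m al^T *m D *m (al *m invmx W *m al^T)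
          = al *m invmx W *m al^T.
  rewrite !mulmxA.
  have -> : al *m invmx W *m al^T *m D *m al = al *m invmx W *m W by rewrite /W !mulmxA.
  by rewrite -(mulmxA al) mulVmx // mulmx1.
by rewrite /W subrr subr0.
Qed.

Lemma Pm_pd p d (al : 'M[R]_(p, d)) D Y : al^T *m al = 1%:M -> sym_pd D ->
  sym_pd Y -> sym_pd (Pm al D Y).
Proof.
move=> ha hD hY; split.
  by rewrite /Pm linearD /= Gm_sym // !trmx_mul trmxK hY.1 mulmxA.
move=> x nz.
have eq1 : qf (Pm al D Y) x = qf (Gm al D) x + qf Y (al^T *m x).
  by rewrite /Pm qfD qf_mul trmxK.
have eq2 : qf (Gm al D) x = qf D (Gm al D *m x).
  by rewrite qf_mul Gm_sym // GDG.
have eq3 : qf (Gm al D) x = qf (invmx D) x - qf (invmx (al^T *m D *m al)) (al^T *m x).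
  by rewrite /Gm qfD qfN qf_mul trmxK.
rewrite -/(qf _ _).
case: (eqVneq (al^T *m x) 0) => h.
  by rewrite eq1 eq3 h !qf0 subr0 addr0; apply: (pd_inv hD).2.
rewrite eq1 addRE; have := pd_ge0 (Gm al D *m x) hD; rewrite -eq2.
have := hY.2 _ h; rewrite -/(qf _ _); lra.
Qed.

Lemma Pm_inv p d (al : 'M[R]_(p, d)) D Y : al^T *m al = 1%:M -> sym_pd D ->
  sym_pd Y -> al^T *m invmx (Pm al D Y) *m al = invmx Y.
Proof.
move=> ha hD hY; have uD := pd_unit hD; have uW := pd_unit (pd_W ha hD).
have uP := pd_unit (Pm_pd ha hD hY).
set W := al^T *m D *m al in uW *.
have e1 : Pm al D Y *m (D *m al) = al *m (Y *m W).
  rewrite /Pm /Gm -/W !mulmxDl mulNmx !mulmxA mulVmx // mul1mx.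
  have h : forall X : 'M[R]_(p, d), X *m al^T *m D *m al = X *m W.
    by move=> X; rewrite /W !mulmxA.
  by rewrite !h mulmxKV // addrN add0r mulmxA.
have e2 : invmx (Pm al D Y) *m al *m (Y *m W) = D *m al.
  by rewrite -mulmxA -e1 mulKmx.
have e3 : al^T *m invmx (Pm al D Y) *m al *m Y *m W = W.
  have -> : al^T *m invmx (Pm al D Y) *m al *m Y *m W
     = al^T *m (invmx (Pm al D Y) *m al *m (Y *m W)) by rewrite !mulmxA.
  by rewrite e2 /W !mulmxA.
have e4 : al^T *m invmx (Pm al D Y) *m al *m Y = 1%:M.
  by rewrite -[LHS]mulmx1 -(mulmxV uW) mulmxA e3 mulmxV.
by apply/esym/inv_uniq/mulmx1C.
Qed.

Lemma Pm_det p d (al : 'M[R]_(p, d)) D Y : al^T *m al = 1%:M -> sym_pd D ->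
  \det (Pm al D Y) = \det (al^T *m D *m al) * \det Y / \det D.
Proof.
move=> ha hD; have uD := pd_unit hD; have uW := pd_unit (pd_W ha hD).
set W := al^T *m D *m al in uW *.
have e1 : invmx D *m (1%:M + (D *m al *m (Y - invmx W)) *m al^T) = Pm al D Y.
  rewrite mulmxDr mulmx1 !mulmxA mulVmx // mul1mx mulmxBr mulmxBl.
  by rewrite /Pm /Gm -/W addrA addrAC.
have e2 : 1%:M + al^T *m (D *m al *m (Y - invmx W)) = W *m Y.
  by rewrite !mulmxA -/W mulmxBr mulmxV // addrCA subrr addr0.
rewrite -e1 det_mulmx sylvester e2 det_mulmx det_inv mulrC.
reflexivity.
Qed.

Lemma Pm_tr p d (al : 'M[R]_(p, d)) D Y (S : 'M[R]_p) :
  \tr (Pm al D Y *m S) = \tr (invmx D *m S)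
     - \tr (invmx (al^T *m D *m al) *m (al^T *m S *m al))
     + \tr (Y *m (al^T *m S *m al)).
Proof.
rewrite /Pm /Gm !mulmxDl mulNmx !mxtraceD raddfN /=.
by rewrite -!mulmxA !(mxtrace_mulC al) !mulmxA.
Qed.



Lemma lnMD (x y z : R) : Rlt R0 x -> Rlt R0 y -> Rlt R0 z ->
  ln ((x * y / z)%R) = Rminus (Rplus (ln x) (ln y)) (ln z).
Proof.
move=> hx hy hz; rewrite !mulRE invRE ln_mult; last exact: Rinv_0_lt_compat.
  by rewrite ln_mult // ln_Rinv.
exact: Rmult_lt_0_compat.
Qed.

Lemma Gfun_eq n p r d (S : 'M[R]_p) (F : 'M[R]_(n, r)) (M : 'M[R]_(n, p))
  (al : 'M[R]_(p, d)) (D : 'M[R]_p) :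
  Gfun S F M al D = - (INR p * INR n / 2) * ln (2 * PI) - INR n / 2 *
    (ln (\det D) + \tr (invmx D *m S)
     - \tr (invmx (al^T *m D *m al) *m (al^T *m Sfit F M *m al))).
Proof. rewrite /Gfun; ring. Qed.

Lemma fin_ineq (c h x y : R) : Rle R0 h -> Rle y x ->
  Rle ((c - h * x)%R) ((c - h * y)%R).
Proof.
move=> hh hxy; have := Rmult_le_compat_l _ _ _ hh hxy.
rewrite !addRE !oppRE !mulRE; lra.
Qed.

Lemma half_ge0 n : Rle R0 ((INR n / 2)%R).
Proof.
rewrite mulRE invRE (natRE 2) /=; apply: Rmult_le_pos; first exact: pos_INR.
by apply: Rlt_le; apply: Rinv_0_lt_compat; lra.
Qed.

Theorem mainTheorem2 (n p r d : nat)
  (hn : (0 < n)%N) (hp : (0 < p)%N) (hr : (0 < r)%N) (hd : (0 < d)%N)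
  (hdpr : (d <= minn p r)%N)
  (S : 'M[R]_p) (F : 'M[R]_(n, r)) (M : 'M[R]_(n, p)) (alpha : 'M[R]_(p, d))
  (hS : sym_pd S)
  (hF : \rank F = r)
  (hSres : sym_pd (Sres S F M))
  (halpha : alpha^T *m alpha = 1%:M) :
  exists Delta0 : 'M[R]_p,
    sym_pd Delta0 /\
    invmx Delta0 = invmx S
                   + alpha *m invmx (alpha^T *m Sres S F M *m alpha) *m alpha^T
                   - alpha *m invmx (alpha^T *m S *m alpha) *m alpha^T /\
    (forall Delta : 'M[R]_p, sym_pd Delta ->
       Rle (Gfun S F M alpha Delta) (Gfun S F M alpha Delta0)) /\
    Gfun S F M alpha Delta0 =
      (- (INR p * INR n / 2) * (ln (2 * PI) + 1)
       - INR n / 2 * ln (\det (alpha^T *m Sres S F M *m alpha))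
       - INR n / 2 * ln (\det S)
       + INR n / 2 * ln (\det (alpha^T *m S *m alpha)))%R.
Proof.
have eAr : alpha^T *m Sres S F M *m alpha = alpha^T *m S *m alpha - alpha^T *m Sfit F M *m alpha.
  by rewrite /Sres mulmxBr mulmxBl.
set al := alpha.
set A := al^T *m S *m al.
set Ar := al^T *m Sres S F M *m al.
set B := al^T *m Sfit F M *m al.
have hA : sym_pd A := pd_W halpha hS.
have hAr : sym_pd Ar := pd_W halpha hSres.
have uS := pd_unit hS; have uA := pd_unit hA; have uAr := pd_unit hAr.
have dS := det_pos hS; have dA := det_pos hA; have dAr := det_pos hAr.
have ne0 : forall x : R, Rlt R0 x -> x != 0.
  by move=> x hx; apply/eqP => e; rewrite e in hx; exact: (Rlt_irrefl _ hx).
have hP0 := Pm_pd halpha hS (pd_inv hAr).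
set P0 := Pm al S (invmx Ar) in hP0.
exists (invmx P0).
have eW0 : al^T *m invmx P0 *m al = Ar by rewrite Pm_inv ?invmxK //; exact: pd_inv.
have trdd : \tr (1%:M : 'M[R]_d) = INR d by rewrite mxtrace1 natRE.
have trpp : \tr (1%:M : 'M[R]_p) = INR p by rewrite mxtrace1 natRE.
have ldet0 : ln (\det (invmx P0)) = ln (\det S) + ln (\det Ar) - ln (\det A).
  transitivity (ln ((\det S * \det Ar / \det A)%R)); last exact: lnMD.
  congr ln.
  rewrite det_inv /P0 Pm_det // det_inv -/A.
  have := ne0 _ dS; have := ne0 _ dA; have := ne0 _ dAr => h1 h2 h3.
  by field; rewrite h1 h2 h3.
have tr0 : \tr (invmx (invmx P0) *m S) = INR p - INR d + \tr (invmx Ar *m A).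
  by rewrite invmxK /P0 Pm_tr mulVmx // -/A mulVmx // trpp trdd.
have trB0 : \tr (invmx (al^T *m invmx P0 *m al) *m B) = \tr (invmx Ar *m A) - INR d.
  have eB : B = A - Ar by rewrite /Ar /al eAr -/al -/A opprB addrC subrK.
  by rewrite eW0 eB mulmxBr mulVmx // raddfB /= trdd.
split; first exact: pd_inv.
split.
  by rewrite invmxK /P0 /Pm /Gm -/A addrAC.
split; last first.
  rewrite Gfun_eq -/B trB0 tr0 ldet0; ring.
move=> D hD.
set W := al^T *m D *m al.
have hW : sym_pd W := pd_W halpha hD.
have uW := pd_unit hW; have uD := pd_unit hD.
have dW := det_pos hW; have dD := det_pos hD.
have hDp := Pm_pd halpha hD (pd_inv hA).
set Dp := Pm al D (invmx A) in hDp.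
have i1 := logdet_ineq (pd_inv hDp) hS.
rewrite invmxK /Dp Pm_tr -/W -/A mulVmx // trdd in i1.
have ldp : ln (\det (invmx Dp)) = ln (\det D) + ln (\det A) - ln (\det W).
  transitivity (ln ((\det D * \det A / \det W)%R)); last exact: lnMD.
  congr ln.
  rewrite det_inv /Dp Pm_det // det_inv -/W.
  have := ne0 _ dD; have := ne0 _ dA; have := ne0 _ dW => h1 h2 h3.
  by field; rewrite h1 h2 h3.
rewrite /Dp in ldp; rewrite ldp in i1.
have i2 := logdet_ineq hW hAr.
have eB : B = A - Ar by rewrite /Ar /al eAr -/al -/A opprB addrC subrK.
have trWB : \tr (invmx W *m B) = \tr (invmx W *m A) - \tr (invmx W *m Ar).
  by rewrite eB mulmxBr raddfB.
rewrite !Gfun_eq -/W -/B trB0 tr0 ldet0 trWB.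
apply: fin_ineq; first exact: half_ge0.
move: i1 i2; rewrite ?(addRE, oppRE) => i1 i2; lra.
Qed.
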